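(* Let $g:\mathbb{R}^m\to\mathbb{R}$ be $\gamma_z$-strongly convex for some $\gamma_z\geq0$, and let $\mathcal{D}(\cdot)$ be a location-scale family on a convex set $\Theta\subseteq\mathbb{R}^d$, $z_\theta\sim\mathcal{D}(\theta)\iff z_\theta\overset{d}{=}(\Sigma_0+\Sigma(\theta))z_0+\mu_0+\mu\theta$. Then for all $\theta,\theta'\in\Theta$ and $\alpha\in(0,1)$, $$\mathbb{E}_{z\sim\mathcal{D}(\alpha\theta+(1-\alpha)\theta')}[g(z)]\leq\mathbb{E}_{z\sim\alpha\mathcal{D}(\theta)+(1-\alpha)\mathcal{D}(\theta')}[g(z)]-\frac{\alpha(1-\alpha)\gamma_z}{2}\mathbb{E}_{z_0\sim\mathcal{D}_0}\|\Sigma(\theta-\theta')z_0+\mu(\theta-\theta')\|_2^2.$$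
   Context: Location-scale family: $z_0\sim\mathcal{D}_0$ is drawn from a fixed zero-mean distribution $\mathcal{D}_0$ on $\mathbb{R}^m$, $\Sigma_0\in\mathbb{R}^{m\times m}$, $\mu_0\in\mathbb{R}^m$ fixed, $\mu:\mathbb{R}^d\to\mathbb{R}^m$ and $\Sigma:\mathbb{R}^d\to\mathbb{R}^{m\times m}$ linear maps. $g$ is $\gamma_z$-strongly convex if $g(z)-\frac{\gamma_z}{2}\|z\|_2^2$ is convex. $\alpha\mathcal{D}(\theta)+(1-\alpha)\mathcal{D}(\theta')$ denotes the mixture distribution. *)

(* Defs.v *)
From HB Require Import structures.
From mathcomp Require Import all_boot all_order all_algebra.
From mathcomp Require Import all_classical all_reals all_analysis.
Set Implicit Arguments. Unset Strict Implicit. Unset Printing Implicit Defensive.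
Import Order.TTheory GRing.Theory Num.Theory.
Local Open Scope ring_scope.
Local Open Scope classical_set_scope.

Definition sqnorm (R : realType) (m : nat) (v : 'cV[R]_m) : R :=
  \sum_(i < m) v i 0 ^+ 2.

Definition convex_function (R : realType) (m : nat) (f : 'cV[R]_m -> R) : Prop :=
  forall (x y : 'cV[R]_m) (t : R), 0 <= t -> t <= 1 ->
    f (t *: x + (1 - t) *: y) <= t * f x + (1 - t) * f y.

Definition strongly_convex (R : realType) (m : nat) (gam : R)
  (g : 'cV[R]_m -> R) : Prop :=
  convex_function (fun z => g z - gam / 2 * sqnorm z).

Definition convex_subset (R : realType) (d : nat) (S : set 'cV[R]_d) : Prop :=
  forall (x y : 'cV[R]_d) (t : R), S x -> S y -> 0 <= t -> t <= 1 ->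
    S (t *: x + (1 - t) *: y).

Definition linear_map (R : realType) (U V : lmodType R) (f : U -> V) : Prop :=
  forall (a : R) (x y : U), f (a *: x + y) = a *: f x + f y.

Definition ls_sample (R : realType) (m d : nat) (T : Type)
  (Sig0 : 'M[R]_m) (mu0 : 'cV[R]_m)
  (Sig : 'cV[R]_d -> 'M[R]_m) (mu : 'cV[R]_d -> 'cV[R]_m)
  (z0 : T -> 'cV[R]_m) (theta : 'cV[R]_d) (w : T) : 'cV[R]_m :=
  (Sig0 + Sig theta) *m z0 w + mu0 + mu theta.

(* E_{z ~ D(theta)} [g z], computed through z0 ~ D0 (law of z0 under P) *)
Definition ls_expect (R : realType) (m d : nat) (dT : measure_display)
  (T : measurableType dT) (P : probability T R)
  (Sig0 : 'M[R]_m) (mu0 : 'cV[R]_m)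
  (Sig : 'cV[R]_d -> 'M[R]_m) (mu : 'cV[R]_d -> 'cV[R]_m)
  (z0 : T -> 'cV[R]_m) (g : 'cV[R]_m -> R) (theta : 'cV[R]_d) : \bar R :=
  (\int[P]_w (g (ls_sample Sig0 mu0 Sig mu z0 theta w))%:E)%E.

Definition ls_mixture_expect (R : realType) (m d : nat) (dT : measure_display)
  (T : measurableType dT) (P : probability T R)
  (Sig0 : 'M[R]_m) (mu0 : 'cV[R]_m)
  (Sig : 'cV[R]_d -> 'M[R]_m) (mu : 'cV[R]_d -> 'cV[R]_m)
  (z0 : T -> 'cV[R]_m) (g : 'cV[R]_m -> R) (alpha : R)
  (theta theta' : 'cV[R]_d) : \bar R :=
  (alpha%:E * ls_expect P Sig0 mu0 Sig mu z0 g theta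
   + (1 - alpha)%:E * ls_expect P Sig0 mu0 Sig mu z0 g theta')%E.

(* Main.v *)
Require Import Defs.
From HB Require Import structures.
From mathcomp Require Import all_boot all_order all_algebra.
From mathcomp Require Import all_classical all_reals all_analysis.
From mathcomp Require Import ring lra measurable_realfun.
Import Order.TTheory GRing.Theory Num.Theory.
Local Open Scope ring_scope.
Local Open Scope classical_set_scope.

Set Implicit Arguments.
Section Helpers.
Variable R : realType.

Lemma lin0 (U V : lmodType R) (f : U -> V) : linear_map f -> f 0 = 0.
Proof.
move=> hf; have := hf 1 0 0; rewrite !scale1r addr0 => H.
by apply: (addrI (f 0)); rewrite addr0 -H.
Qed.

Lemma linB (U V : lmodType R) (f : U -> V) (hf : linear_map f) x y : f (x - y) = f x - f y.
Proof.
 have := hf (-1) y x; rewrite !scaleN1r addrC => ->.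
by rewrite addrC.
Qed.

Lemma linZ (U V : lmodType R) (f : U -> V) (hf : linear_map f) a x : f (a *: x) = a *: f x.
Proof. by have := hf a x 0; rewrite !addr0 (lin0 hf) addr0. Qed.

Lemma linMix (U V : lmodType R) (f : U -> V) (hf : linear_map f) a x y :
  f (a *: x + (1 - a) *: y) = a *: f x + (1 - a) *: f y.
Proof. by rewrite hf (linZ hf). Qed.

Lemma sqnorm_mix m (u v : 'cV[R]_m) a :
  a * sqnorm u + (1 - a) * sqnorm v - sqnorm (a *: u + (1 - a) *: v)
  = a * (1 - a) * sqnorm (u - v).
Proof.
rewrite /sqnorm !mulr_sumr -!big_split -sumrB /=; apply: eq_bigr => i _.
rewrite !mxE; ring.
Qed.

End Helpers.
Unset Implicit Arguments.

Theorem propositionA2 (R : realType) (m d : nat)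
  (dT : measure_display) (T : measurableType dT) (P : probability T R)
  (z0 : T -> 'cV[R]_m)
  (Sig0 : 'M[R]_m) (mu0 : 'cV[R]_m)
  (Sig : 'cV[R]_d -> 'M[R]_m) (mu : 'cV[R]_d -> 'cV[R]_m)
  (Theta : set 'cV[R]_d) (g : 'cV[R]_m -> R) (gam : R)
  (* D0: z0 has zero mean and finite second moment *)
  (hz0int : forall i : 'I_m, P.-integrable setT (fun w => (z0 w i 0)%:E))
  (hz0mean : forall i : 'I_m, (\int[P]_w (z0 w i 0)%:E = 0)%E)
  (hz0sq : P.-integrable setT (fun w => (sqnorm (z0 w))%:E))
  (* linear maps mu and Sigma *)
  (hSig : linear_map Sig) (hmu : linear_map mu)
  (* convex parameter set *)
  (hTheta : convex_subset Theta)
  (* g is gam-strongly convex, gam >= 0 *)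
  (hgam : 0 <= gam) (hg : strongly_convex gam g)
  (* expectations of g under D(theta) are finite on Theta *)
  (hgint : forall theta, Theta theta ->
     P.-integrable setT
       (fun w => (g (ls_sample Sig0 mu0 Sig mu z0 theta w))%:E)) :
  forall (theta theta' : 'cV[R]_d) (alpha : R),
    Theta theta -> Theta theta' -> 0 < alpha -> alpha < 1 ->
    (ls_expect P Sig0 mu0 Sig mu z0 g (alpha *: theta + (1 - alpha) *: theta')
     <= ls_mixture_expect P Sig0 mu0 Sig mu z0 g alpha theta theta'
        - (alpha * (1 - alpha) * gam / 2)%:E
          * \int[P]_w (sqnorm (Sig (theta - theta') *m z0 w
                               + mu (theta - theta')))%:E)%E.
Proof.
move=> th th' a Th Th' a0 a1.
set zs := ls_sample Sig0 mu0 Sig mu z0.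
set c := a * (1 - a) * gam / 2.
set N := fun w => sqnorm (Sig (th - th') *m z0 w + mu (th - th')).
have c0 : 0 <= c.
  rewrite /c; apply: divr_ge0 => //; apply: mulr_ge0 => //; apply: mulr_ge0; lra.
have zmix w : zs (a *: th + (1 - a) *: th') w = a *: zs th w + (1 - a) *: zs th' w.
  rewrite /zs /ls_sample (linMix hSig) (linMix hmu).
  move: (Sig0 *m z0 w) (Sig th *m z0 w) (Sig th' *m z0 w) => X Y Z.
  rewrite !mulmxDl -!scalemxAl.
  move: (Sig0 *m z0 w) (Sig th *m z0 w) (Sig th' *m z0 w) => X' Y' Z'.
  apply/matrixP => i j; rewrite !mxE; ring.
have zdiff w : zs th w - zs th' w = Sig (th - th') *m z0 w + mu (th - th').
  rewrite /zs /ls_sample (linB hSig) (linB hmu) !mulmxDl ?mulNmx.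
  move: (Sig0 *m z0 w) (Sig th *m z0 w) (Sig th' *m z0 w) => X Y Z.
  apply/matrixP => i j; rewrite !mxE; ring.
have pw w : g (zs (a *: th + (1 - a) *: th') w) + c * N w
            <= a * g (zs th w) + (1 - a) * g (zs th' w).
  have := hg (zs th w) (zs th' w) a (ltW a0) (ltW a1).
  rewrite -zmix /N -zdiff.
  have := @sqnorm_mix R m (zs th w) (zs th' w) a.
  rewrite -zmix /c => E H.
  have -> : a * (1 - a) * gam / 2 * sqnorm (zs th w - zs th' w)
           = gam / 2 * (a * (1 - a) * sqnorm (zs th w - zs th' w)) by ring.
  rewrite -E; lra.
have Tm : Theta (a *: th + (1 - a) *: th') by apply: hTheta => //; lra.
have iA := hgint _ Tm; have i1 := hgint _ Th; have i2 := hgint _ Th'.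
rewrite /ls_mixture_expect /ls_expect -/zs.
set f := fun w => g (zs (a *: th + (1 - a) *: th') w).
set F := fun w => a * g (zs th w) + (1 - a) * g (zs th' w).
have eF : (fun w => (F w)%:E) = (fun w => (a%:E * (g (zs th w))%:E)%E)
     \+ (fun w => ((1 - a)%:E * (g (zs th' w))%:E)%E).
  by apply/funext => w; rewrite /F /= EFinD !EFinM.
have iF : P.-integrable setT (fun w => (F w)%:E).
  by rewrite eF; apply: integrableD => //; apply: integrableZl.
have IF : (\int[P]_w (F w)%:E = a%:E * \int[P]_w (g (zs th w))%:E
            + (1 - a)%:E * \int[P]_w (g (zs th' w))%:E)%E.
  rewrite eF integralD //; try by apply: integrableZl.
  by rewrite !integralZl.
have mz i : measurable_fun setT (fun w => z0 w i 0).
  by apply/measurable_EFinP; exact: (measurable_int P (hz0int i)).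
have mN : measurable_fun setT N.
  rewrite /N /sqnorm.
  apply: measurable_sum => i; apply: measurable_funX.
  under eq_fun do rewrite mxE [X in X + _]mxE.
  apply: measurable_funD; last exact: measurable_cst.
  apply: measurable_sum => j; apply: measurable_funM; [exact: measurable_cst | exact: mz].
have mF : measurable_fun setT (fun w => (F w - f w)%:E).
  apply/measurable_EFinP; apply: measurable_funB.
    by apply/measurable_EFinP; exact: (measurable_int P iF).
  by apply/measurable_EFinP; exact: (measurable_int P iA).
have le1 : (\int[P]_w ((c * N w)%:E) <= \int[P]_w ((F w - f w)%:E))%E.
  apply: ge0_le_integral => //.
  - by move=> w _; rewrite lee_fin; apply: mulr_ge0 => //; rewrite /N /sqnorm sumr_ge0 // => i _; exact: sqr_ge0.
  - by apply/measurable_EFinP; apply: measurable_funM => //; exact: measurable_cst.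
  - by move=> w _; rewrite lee_fin /F /f; have := pw w; lra.
have e1 : (\int[P]_w ((c * N w)%:E) = c%:E * \int[P]_w (N w)%:E)%E.
  under eq_integral do rewrite EFinM.
  apply: ge0_integralZl_EFin => //.
    by move=> w _; rewrite lee_fin /N /sqnorm sumr_ge0 // => i _; exact: sqr_ge0.
  by apply/measurable_EFinP.
have e2 : (\int[P]_w ((F w - f w)%:E) = \int[P]_w (F w)%:E - \int[P]_w (f w)%:E)%E.
  have -> : (fun w => (F w - f w)%:E) = ((fun w => (F w)%:E) \- (fun w => (f w)%:E))%E.
    by apply/funext => w; rewrite /= EFinB.
  by rewrite integralB.
rewrite -IF -e1.
have Nge0 : (0 <= \int[P]_w ((c * N w)%:E))%E.
  apply: integral_ge0 => w _; rewrite lee_fin; apply: mulr_ge0 => //.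
  by rewrite /N /sqnorm sumr_ge0 // => i _; exact: sqr_ge0.
move: le1 Nge0; rewrite e2.
have /fineK <- := integrable_fin_num measurableT iF.
have /fineK <- := integrable_fin_num measurableT iA.
move: (fine _) (fine _) (\int[P]_w ((c * N w)%:E))%E => y x [z| |] //=.
  by rewrite -!EFinD !lee_fin => ? ?; lra.
Qed.
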